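(* Let $R>0$ and let $S$ be the pseudosphere of radius $R$, parametrized by \[ \phi(u,v)=R\big(\sin v\cos u,\ \sin v\sin u,\ \ln\tan(v/2)+\cos v\big),\qquad 0<v<\pi/2, \] and oriented by the unit normal $N=\frac{\phi_u\times\phi_v}{\|\phi_u\times\phi_v\|}$. Let $0<\theta<\pi$ and let $\gamma$ be a loxodrome on $S$ with characteristic angle $\theta$, parametrized by arc length. Then the geodesic curvature of $\gamma$ is constant and equal to \[ k=-\frac{1}{R}\cos\theta. \]
   Context: For an oriented surface $S\subset\mathbb{R}^3$ with unit normal field $N$, the geodesic curvature of a unit-speed curve $\alpha$ on $S$ is $k=\langle\alpha'',N\times\alpha'\rangle$. The parallels of the pseudosphere are the circles $t\mapsto\phi(t,v)$ for fixed $v$. A loxodrome with characteristic angle $\theta\in(0,\pi)$ is a curve meeting all parallels at the fixed angle $\theta$, where $\theta$ is the signed angle (with respect to $N$) from the velocity $\frac{\partial}{\partial t}\phi(t,v)$ of the parallel to the velocity of the curve; the curve is oriented accordingly. *)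

(* Defs.v *)
From Stdlib Require Import Reals.
From Coquelicot Require Import Coquelicot.
Open Scope R_scope.

Definition vec3 : Type := (R * R * R)%type.
Definition vx (a : vec3) : R := fst (fst a).
Definition vy (a : vec3) : R := snd (fst a).
Definition vz (a : vec3) : R := snd a.
Definition mk3 (x y z : R) : vec3 := (x, y, z).

Definition dot3 (a b : vec3) : R := vx a * vx b + vy a * vy b + vz a * vz b.
Definition cross3 (a b : vec3) : vec3 :=
  mk3 (vy a * vz b - vz a * vy b)
      (vz a * vx b - vx a * vz b)
      (vx a * vy b - vy a * vx b).
Definition scal3 (c : R) (a : vec3) : vec3 := mk3 (c * vx a) (c * vy a) (c * vz a).
Definition norm3 (a : vec3) : R := sqrt (dot3 a a).

Definition vderive (f : R -> vec3) (t : R) : vec3 :=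
  mk3 (Derive (fun s => vx (f s)) t) (Derive (fun s => vy (f s)) t)
      (Derive (fun s => vz (f s)) t).
Definition vderivable (f : R -> vec3) (t : R) : Prop :=
  ex_derive (fun s => vx (f s)) t /\ ex_derive (fun s => vy (f s)) t /\
  ex_derive (fun s => vz (f s)) t.

Definition phi (Rr u v : R) : vec3 :=
  mk3 (Rr * sin v * cos u) (Rr * sin v * sin u) (Rr * (ln (tan (v / 2)) + cos v)).
Definition phi_u (Rr u v : R) : vec3 := vderive (fun t => phi Rr t v) u.
Definition phi_v (Rr u v : R) : vec3 := vderive (fun t => phi Rr u t) v.

Definition normalN (Rr u v : R) : vec3 :=
  let c := cross3 (phi_u Rr u v) (phi_v Rr u v) in scal3 (/ norm3 c) c.

Definition geod_curv (Rr : R) (alpha : R -> vec3) (u v : R -> R) (s : R) : R :=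
  dot3 (vderive (vderive alpha) s) (cross3 (normalN Rr (u s) (v s)) (vderive alpha s)).

Definition unit_speed_curve_on_pseudosphere (Rr a b : R) (alpha : R -> vec3)
  (u v : R -> R) : Prop :=
  forall s, a < s < b ->
    0 < v s < PI / 2 /\
    alpha s = phi Rr (u s) (v s) /\
    vderivable alpha s /\
    vderivable (vderive alpha) s /\
    norm3 (vderive alpha s) = 1.

(* Loxodrome with characteristic angle theta: at every point the signed angle
   (w.r.t. N) from the parallel's velocity phi_u to alpha' equals theta, i.e.
   with e = phi_u/|phi_u|:  cos theta = <e, alpha'>, sin theta = <N x e, alpha'>. *)
Definition loxodrome (Rr a b theta : R) (alpha : R -> vec3) (u v : R -> R) : Prop :=
  forall s, a < s < b ->
    let e := scal3 (/ norm3 (phi_u Rr (u s) (v s))) (phi_u Rr (u s) (v s)) in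
    cos theta = dot3 e (vderive alpha s) /\
    sin theta = dot3 (cross3 (normalN Rr (u s) (v s)) e) (vderive alpha s).

(* Main.v *)
Require Import Defs.
From Stdlib Require Import Reals Lra.
From Coquelicot Require Import Coquelicot.
Open Scope R_scope.

Lemma sqrt_eq_l x y : 0 <= y -> x = y * y -> sqrt x = y.
Proof. intros Hy ->. apply sqrt_square; auto. Qed.

Lemma deriv_quot (f g : R -> R) s f' g' : is_derive f s f' -> is_derive g s g' -> 0 < f s ^2 + g s ^2 ->
  is_derive (fun t => g t / sqrt (f t ^2 + g t ^2)) s
   ((g' * (f s ^2 + g s ^2) - g s * (f s * f' + g s * g')) / (sqrt (f s ^2 + g s ^2) * (f s ^2 + g s ^2))).
Proof.
intros Hf Hg Hp.
assert (Hs : 0 < sqrt (f s ^2 + g s ^2)) by (apply sqrt_lt_R0; auto).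
assert (Hss : sqrt (f s ^2 + g s ^2) * sqrt (f s ^2 + g s ^2) = f s ^2 + g s^2) by (apply sqrt_sqrt; lra).
auto_derive.
- repeat split; try (eexists; eassumption); try (simpl in Hp; lra).
  simpl in Hs. lra.
- replace (Derive (fun x => f x) s) with f' by (symmetry; apply is_derive_unique; auto).
  replace (Derive (fun x => g x) s) with g' by (symmetry; apply is_derive_unique; auto).
  replace (f s * (f s * 1) + g s * (g s * 1)) with (f s ^2 + g s ^2) by ring.
  rewrite Hss. field. lra.
Qed.

Lemma deriv_sqrt1 (f g : R -> R) s f' g' : is_derive f s f' -> is_derive g s g' -> 0 < 1 - (f s ^2 + g s ^2) ->
  is_derive (fun t => sqrt (1 - (f t ^2 + g t ^2))) s
   (- (f s * f' + g s * g') / sqrt (1 - (f s ^2 + g s ^2))).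
Proof.
intros Hf Hg Hp.
assert (Hs : 0 < sqrt (1 - (f s ^2 + g s ^2))) by (apply sqrt_lt_R0; auto).
auto_derive.
- repeat split; try (eexists; eassumption); try (simpl in Hp; lra).
- replace (Derive (fun x => f x) s) with f' by (symmetry; apply is_derive_unique; auto).
  replace (Derive (fun x => g x) s) with g' by (symmetry; apply is_derive_unique; auto).
  replace (1 + - (f s * (f s * 1) + g s * (g s * 1))) with (1 - (f s ^2 + g s ^2)) by ring. field. lra.
Qed.

Lemma mk3_eq x y z x' y' z' : x = x' -> y = y' -> z = z' -> mk3 x y z = mk3 x' y' z'.
Proof. intros -> -> ->; reflexivity. Qed.

Lemma phi_u_eq Rr u v : phi_u Rr u v = mk3 (- (Rr * sin v * sin u)) (Rr * sin v * cos u) 0.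
Proof.
unfold phi_u, vderive. unfold phi, vx, vy, vz, mk3 at 1 2 3; simpl.
apply mk3_eq.
- apply is_derive_unique. auto_derive; auto. ring.
- apply is_derive_unique. auto_derive; auto. ring.
- apply Derive_const.
Qed.

Lemma phi_v_eq Rr u v : 0 < v < PI/2 -> phi_v Rr u v =
  mk3 (Rr * cos v * cos u) (Rr * cos v * sin u) (Rr * (/ sin v - sin v)).
Proof.
intros Hv.
assert (H2 : 0 < v/2 < PI/2) by lra.
assert (Hs : 0 < sin (v/2)) by (apply sin_gt_0; lra).
assert (Hc : 0 < cos (v/2)) by (apply cos_gt_0; lra).
assert (Hsv : sin v = 2 * sin (v/2) * cos (v/2)).
{ replace v with (2 * (v/2)) at 1 by field. apply sin_2a. }
assert (Hp := sin2_cos2 (v/2)). unfold Rsqr in Hp.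
unfold phi_v, vderive. unfold phi, vx, vy, vz, mk3 at 1 2 3; simpl.
apply mk3_eq.
- apply is_derive_unique. auto_derive; auto. ring.
- apply is_derive_unique. auto_derive; auto. ring.
- apply is_derive_unique. unfold tan. auto_derive.
  + repeat split; try lra. apply Rdiv_lt_0_compat; lra.
  + change (v * / 2) with (v / 2).
    replace (/ sin v) with ((sin (v/2) * sin (v/2) + cos (v/2) * cos (v/2)) / sin v)
      by (rewrite Hp; unfold Rdiv; ring).
    rewrite Hsv. field. lra.
Qed.

Lemma s2c2 x : sin x ^ 2 + cos x ^ 2 = 1.
Proof. pose proof (sin2_cos2 x). unfold Rsqr in H. nra. Qed.

Lemma cross_eq Rr u v : 0 < Rr -> 0 < v < PI/2 ->
  cross3 (phi_u Rr u v) (phi_v Rr u v) =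
  scal3 (Rr^2 * cos v) (mk3 (cos u * cos v) (sin u * cos v) (- sin v)).
Proof.
intros HR Hv.
assert (Hs : 0 < sin v) by (apply sin_gt_0; lra).
pose proof (s2c2 u) as Hu. pose proof (s2c2 v) as Hw.
rewrite phi_u_eq, phi_v_eq by auto.
unfold cross3, scal3, vx, vy, vz, mk3; simpl.
apply mk3_eq.
- transitivity (Rr^2 * cos u * (1 - sin v ^2)). field. lra.
  replace (1 - sin v ^2) with (cos v ^2) by lra. ring.
- transitivity (Rr^2 * sin u * (1 - sin v ^2)). field. lra.
  replace (1 - sin v ^2) with (cos v ^2) by lra. ring.
- transitivity (- Rr^2 * sin v * cos v * (sin u ^2 + cos u ^2)). ring.
  rewrite Hu. ring.
Qed.

Lemma normalN_eq Rr u v : 0 < Rr -> 0 < v < PI/2 ->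
  normalN Rr u v = mk3 (cos u * cos v) (sin u * cos v) (- sin v).
Proof.
intros HR Hv.
assert (Hs : 0 < sin v) by (apply sin_gt_0; lra).
assert (Hc : 0 < cos v) by (apply cos_gt_0; lra).
pose proof (s2c2 u) as Hu. pose proof (s2c2 v) as Hw.
unfold normalN. rewrite cross_eq by auto.
assert (Hn : norm3 (scal3 (Rr^2 * cos v) (mk3 (cos u * cos v) (sin u * cos v) (- sin v))) = Rr^2 * cos v).
{ unfold norm3. apply sqrt_eq_l. nra.
  unfold dot3, scal3, vx, vy, vz, mk3; simpl.
  transitivity ((Rr^2 * cos v)^2 * ((sin u ^2 + cos u ^2) * cos v ^2 + sin v ^2)). ring.
  rewrite Hu, Rmult_1_l, Rplus_comm, Hw. ring. }
rewrite Hn. unfold scal3, vx, vy, vz, mk3; simpl.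
apply mk3_eq; field; nra.
Qed.

Lemma e_eq Rr u v : 0 < Rr -> 0 < v < PI/2 ->
  scal3 (/ norm3 (phi_u Rr u v)) (phi_u Rr u v) = mk3 (- sin u) (cos u) 0.
Proof.
intros HR Hv.
assert (Hs : 0 < sin v) by (apply sin_gt_0; lra).
pose proof (s2c2 u) as Hu.
assert (Hn : norm3 (phi_u Rr u v) = Rr * sin v).
{ rewrite phi_u_eq. unfold norm3. apply sqrt_eq_l. nra.
  unfold dot3, vx, vy, vz, mk3; simpl.
  transitivity ((Rr * sin v)^2 * (sin u ^2 + cos u ^2)). ring. rewrite Hu. ring. }
rewrite Hn, phi_u_eq. unfold scal3, vx, vy, vz, mk3; simpl.
apply mk3_eq; field; nra.
Qed.

Lemma frame_alg a b d c sn sv cv ct st :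
  sn^2 + c^2 = 1 -> sv^2 + cv^2 = 1 -> ct^2 + st^2 = 1 ->
  ct = - sn * a + c * b ->
  st = sv * c * a + sv * sn * b + (c * c * cv + sn * sn * cv) * d ->
  a^2 + b^2 + d^2 = 1 ->
  a = c * sv * st - sn * ct /\ b = sn * sv * st + c * ct /\ d = cv * st.
Proof.
intros Hu Hv Ht H1 H2 H3.
set (P := c * a + sn * b).
assert (HPQ : a^2 + b^2 = P^2 + ct^2).
{ rewrite H1. unfold P. transitivity ((sn^2+c^2) * (a^2+b^2)). rewrite Hu; ring. ring. }
assert (H2' : st = sv * P + cv * d).
{ rewrite H2. unfold P. transitivity (sv * (c * a + sn * b) + cv * (sn^2 + c^2) * d). ring.
  rewrite Hu. ring. }
set (n := cv * P - sv * d).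
assert (Hn2 : st^2 + n^2 = P^2 + d^2).
{ rewrite H2'. unfold n. transitivity ((sv^2+cv^2) * (P^2 + d^2)). ring. rewrite Hv; ring. }
assert (Hn : n = 0) by nra.
assert (HP : P = sv * st).
{ transitivity ((sv^2+cv^2) * P). rewrite Hv; ring.
  transitivity (sv * st + cv * n). rewrite H2'; unfold n; ring. rewrite Hn; ring. }
assert (Hd : d = cv * st).
{ transitivity ((sv^2+cv^2) * d). rewrite Hv; ring.
  transitivity (cv * st - sv * n). rewrite H2'; unfold n; ring. rewrite Hn; ring. }
split; [|split]; auto.
- transitivity ((sn^2+c^2) * a). rewrite Hu; ring.
  transitivity (c * P - sn * ct). rewrite H1; unfold P; ring. rewrite HP; ring.
- transitivity ((sn^2+c^2) * b). rewrite Hu; ring.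
  transitivity (sn * P + c * ct). rewrite H1; unfold P; ring. rewrite HP; ring.
Qed.

Lemma frame Rr u v T ct st : 0 < Rr -> 0 < v < PI/2 -> ct^2 + st^2 = 1 ->
  ct = dot3 (scal3 (/ norm3 (phi_u Rr u v)) (phi_u Rr u v)) T ->
  st = dot3 (cross3 (normalN Rr u v) (scal3 (/ norm3 (phi_u Rr u v)) (phi_u Rr u v))) T ->
  norm3 T = 1 ->
  vx T = cos u * sin v * st - sin u * ct /\ vy T = sin u * sin v * st + cos u * ct /\
  vz T = cos v * st.
Proof.
intros HR Hv Ht H1 H2 H3.
rewrite e_eq in H1, H2 by auto. rewrite normalN_eq in H2 by auto.
assert (H3' : dot3 T T = 1).
{ unfold norm3 in H3. assert (0 <= dot3 T T) by (unfold dot3; nra).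
  rewrite <- (sqrt_sqrt (dot3 T T)) by auto. rewrite H3; ring. }
destruct T as [[a b] d]. unfold dot3, cross3, vx, vy, vz, mk3 in *; simpl in *.
apply frame_alg.
all: first [ pose proof (s2c2 u); lra | pose proof (s2c2 v); lra | simpl; lra
           | rewrite H1; ring | rewrite H2; ring ].
Qed.

Lemma deriv_A (f g : R -> R) s f' g' k1 k2 : is_derive f s f' -> is_derive g s g' -> 0 < f s ^2 + g s ^2 ->
  is_derive (fun t => k1 * f t - k2 * (g t / sqrt (f t ^2 + g t ^2))) s
   (k1 * f' - k2 * ((g' * (f s ^2 + g s ^2) - g s * (f s * f' + g s * g')) / (sqrt (f s ^2 + g s ^2) * (f s ^2 + g s ^2)))).
Proof.
intros Hf Hg Hp.
assert (Hs : 0 < sqrt (f s ^2 + g s ^2)) by (apply sqrt_lt_R0; auto).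
assert (Hss : sqrt (f s ^2 + g s ^2) * sqrt (f s ^2 + g s ^2) = f s ^2 + g s^2) by (apply sqrt_sqrt; lra).
auto_derive.
- repeat split; try (eexists; eassumption); try (simpl in Hp; lra).
  simpl in Hs. lra.
- replace (Derive (fun x => f x) s) with f' by (symmetry; apply is_derive_unique; auto).
  replace (Derive (fun x => g x) s) with g' by (symmetry; apply is_derive_unique; auto).
  replace (f s * (f s * 1) + g s * (g s * 1)) with (f s ^2 + g s ^2) by ring.
  rewrite Hss. field. lra.
Qed.

Lemma deriv_B (f g : R -> R) s f' g' k1 k2 : is_derive f s f' -> is_derive g s g' -> 0 < f s ^2 + g s ^2 ->
  is_derive (fun t => k1 * g t + k2 * (f t / sqrt (f t ^2 + g t ^2))) s
   (k1 * g' + k2 * ((f' * (f s ^2 + g s ^2) - f s * (f s * f' + g s * g')) / (sqrt (f s ^2 + g s ^2) * (f s ^2 + g s ^2)))).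
Proof.
intros Hf Hg Hp.
assert (Hs : 0 < sqrt (f s ^2 + g s ^2)) by (apply sqrt_lt_R0; auto).
assert (Hss : sqrt (f s ^2 + g s ^2) * sqrt (f s ^2 + g s ^2) = f s ^2 + g s^2) by (apply sqrt_sqrt; lra).
auto_derive.
- repeat split; try (eexists; eassumption); try (simpl in Hp; lra).
  simpl in Hs. lra.
- replace (Derive (fun x => f x) s) with f' by (symmetry; apply is_derive_unique; auto).
  replace (Derive (fun x => g x) s) with g' by (symmetry; apply is_derive_unique; auto).
  replace (f s * (f s * 1) + g s * (g s * 1)) with (f s ^2 + g s ^2) by ring.
  rewrite Hss. field. lra.
Qed.

Lemma deriv_D (f g : R -> R) s f' g' k : is_derive f s f' -> is_derive g s g' -> 0 < 1 - (f s ^2 + g s ^2) ->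
  is_derive (fun t => k * sqrt (1 - (f t ^2 + g t ^2))) s
   (k * (- (f s * f' + g s * g') / sqrt (1 - (f s ^2 + g s ^2)))).
Proof.
intros Hf Hg Hp.
apply is_derive_scal. apply deriv_sqrt1; auto.
Qed.

Lemma rho_eq Rr u v : 0 < Rr -> 0 < v < PI/2 ->
  sqrt ((Rr * sin v * cos u / Rr)^2 + (Rr * sin v * sin u / Rr)^2) = sin v.
Proof.
intros HR Hv. assert (Hs : 0 < sin v) by (apply sin_gt_0; lra).
pose proof (s2c2 u) as Hu.
apply sqrt_eq_l; [lra|].
transitivity (sin v ^2 * (sin u ^2 + cos u ^2)). field. lra. rewrite Hu; ring.
Qed.

Lemma rho1_eq Rr u v : 0 < Rr -> 0 < v < PI/2 ->
  sqrt (1 - ((Rr * sin v * cos u / Rr)^2 + (Rr * sin v * sin u / Rr)^2)) = cos v.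
Proof.
intros HR Hv. assert (Hs : 0 < cos v) by (apply cos_gt_0; lra).
pose proof (s2c2 u) as Hu. pose proof (s2c2 v) as Hw.
apply sqrt_eq_l; [lra|].
transitivity (1 - sin v ^2 * (sin u ^2 + cos u ^2)). field. lra. rewrite Hu; lra.
Qed.

Lemma loc_interval a b s : a < s < b -> locally s (fun t => a < t < b).
Proof.
intros H. apply (open_and (fun t => a < t) (fun t => t < b)); [apply open_gt | apply open_lt | auto].
Qed.

Lemma final_alg (c sn sv cv ct st Rr X Y Da Db Dd : R) :
  sn^2 + c^2 = 1 -> sv^2 + cv^2 = 1 -> ct^2 + st^2 = 1 -> 0 < sv -> 0 < cv -> 0 < Rr ->
  X = sv * c -> Y = sv * sn ->
  let A := c * sv * st - sn * ct in let B := sn * sv * st + c * ct in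
  Da = st * (A / Rr) - ct * (((B / Rr) * (X^2+Y^2) - Y * (X * (A/Rr) + Y * (B/Rr))) / (sv * (X^2+Y^2))) ->
  Db = st * (B / Rr) + ct * (((A / Rr) * (X^2+Y^2) - X * (X * (A/Rr) + Y * (B/Rr))) / (sv * (X^2+Y^2))) ->
  Dd = st * (- (X * (A/Rr) + Y * (B/Rr)) / cv) ->
  dot3 (mk3 Da Db Dd) (cross3 (mk3 (c*cv) (sn*cv) (-sv)) (mk3 A B (cv*st))) = - (1 / Rr) * ct.
Proof.
intros Hu Hv Ht Hsv Hcv HR HX HY A B HDa HDb HDd.
assert (HS : X^2 + Y^2 = sv^2).
{ subst X Y. transitivity (sv^2 * (sn^2 + c^2)). ring. rewrite Hu; ring. }
assert (Hq : X * (A/Rr) + Y * (B/Rr) = sv^2 * st / Rr).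
{ subst X Y. unfold A, B. transitivity (sv^2 * st * (sn^2 + c^2) / Rr). field. lra.
  rewrite Hu. field. lra. }
rewrite HS, Hq in HDa, HDb. rewrite Hq in HDd. subst X Y.
assert (HDa' : Da = (st * A - ct^2 * c / sv) / Rr).
{ rewrite HDa. unfold A, B. field. lra. }
assert (HDb' : Db = (st * B - ct^2 * sn / sv) / Rr).
{ rewrite HDb. unfold A, B. field. lra. }
assert (HDd' : Dd = - (st^2 * sv^2) / (Rr * cv)).
{ rewrite HDd. field. lra. }
assert (HM : cross3 (mk3 (c*cv) (sn*cv) (-sv)) (mk3 A B (cv*st)) =
             mk3 (sn * st + sv * c * ct) (sv * sn * ct - c * st) (cv * ct)).
{ unfold cross3, vx, vy, vz, mk3 at 1 2 3 4 5 6 7 8 9 10 11 12 13; simpl. apply mk3_eq.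
  - transitivity (sn * st * (sv^2 + cv^2) + sv * c * ct). unfold B; ring. rewrite Hv; ring.
  - transitivity (- c * st * (sv^2 + cv^2) + sv * sn * ct). unfold A; ring. rewrite Hv; ring.
  - transitivity (cv * ct * (sn^2 + c^2)). unfold A, B; ring. rewrite Hu; ring. }
rewrite HM. unfold dot3, vx, vy, vz, mk3; simpl.
rewrite HDa', HDb', HDd'.
transitivity (((sn^2+c^2) * (st^2 * ct * (sv^2 - 1) - ct^3) - st^2 * sv^2 * ct) / Rr).
{ unfold A, B. field. lra. }
rewrite Hu.
transitivity (- (ct * (ct^2 + st^2)) / Rr). field. lra.
rewrite Ht. field. lra.
Qed.

Theorem proposition23 (Rr theta a b : R) (alpha : R -> vec3) (u v : R -> R) :
  0 < Rr -> 0 < theta < PI -> a < b ->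
  unit_speed_curve_on_pseudosphere Rr a b alpha u v ->
  loxodrome Rr a b theta alpha u v ->
  forall s, a < s < b -> geod_curv Rr alpha u v s = - (1 / Rr) * cos theta.
Proof.
intros HR Hth Hab Hc Hl s Hs.
set (ct := cos theta). set (st := sin theta).
assert (Ht : ct^2 + st^2 = 1) by (pose proof (s2c2 theta); unfold ct, st; lra).
set (fx := fun t => vx (alpha t)). set (fy := fun t => vy (alpha t)).
set (Ta := fun t => vx (vderive alpha t)).
set (Tb := fun t => vy (vderive alpha t)).
set (Td := fun t => vz (vderive alpha t)).
assert (Hpt : forall t, a < t < b ->
  0 < v t < PI/2 /\ fx t = Rr * sin (v t) * cos (u t) /\ fy t = Rr * sin (v t) * sin (u t) /\
  Ta t = cos (u t) * sin (v t) * st - sin (u t) * ct /\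
  Tb t = sin (u t) * sin (v t) * st + cos (u t) * ct /\ Td t = cos (v t) * st).
{ intros t Htab. destruct (Hc t Htab) as (Hv & Ha & _ & _ & Hn).
  destruct (Hl t Htab) as [H1 H2].
  destruct (frame Rr (u t) (v t) (vderive alpha t) ct st HR Hv Ht H1 H2 Hn) as (E1 & E2 & E3).
  unfold fx, fy, Ta, Tb, Td. rewrite Ha. unfold phi, vx, vy, mk3 at 1 2; simpl.
  repeat split; auto; lra. }
destruct (Hpt s Hs) as (Hv & Efx & Efy & Ea & Eb & Ed).
destruct (Hc s Hs) as (_ & _ & Hd1 & Hd2 & _).
destruct Hd1 as (Dx & Dy & _).
assert (IX : is_derive (fun t => fx t / Rr) s (Ta s / Rr)).
{ pose proof (Derive_correct _ _ Dx) as D.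
  apply (is_derive_scal _ _ (/ Rr)) in D.
  replace (Ta s / Rr) with (/ Rr * Derive (fun s => vx (alpha s)) s)
    by (unfold Ta, vderive, vx, mk3; simpl; unfold Rdiv; ring).
  eapply is_derive_ext; [|exact D]. intros t; simpl. unfold fx, Rdiv; ring. }
assert (IY : is_derive (fun t => fy t / Rr) s (Tb s / Rr)).
{ pose proof (Derive_correct _ _ Dy) as D.
  apply (is_derive_scal _ _ (/ Rr)) in D.
  replace (Tb s / Rr) with (/ Rr * Derive (fun s => vy (alpha s)) s)
    by (unfold Tb, vderive, vy, mk3; simpl; unfold Rdiv; ring).
  eapply is_derive_ext; [|exact D]. intros t; simpl. unfold fy, Rdiv; ring. }
assert (Hsv : 0 < sin (v s)) by (apply sin_gt_0; lra).
assert (Hcv : 0 < cos (v s)) by (apply cos_gt_0; lra).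
assert (Hrho2 : (fx s / Rr)^2 + (fy s / Rr)^2 = sin (v s) ^2).
{ rewrite Efx, Efy. pose proof (s2c2 (u s)).
  transitivity (sin (v s) ^2 * (sin (u s) ^2 + cos (u s) ^2)). field. lra.
  rewrite H; ring. }
assert (HL := loc_interval a b s Hs).
assert (DA : is_derive Ta s
   (st * (Ta s / Rr) - ct * (((Tb s / Rr) * ((fx s / Rr) ^2 + (fy s / Rr) ^2) - (fy s / Rr) * ((fx s / Rr) * (Ta s / Rr) + (fy s / Rr) * (Tb s / Rr))) / (sqrt ((fx s / Rr) ^2 + (fy s / Rr) ^2) * ((fx s / Rr) ^2 + (fy s / Rr) ^2))))).
{ eapply is_derive_ext_loc; [| apply (deriv_A _ _ s _ _ st ct IX IY)].
  - apply (filter_imp (fun t => a < t < b)); auto.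
    intros t Htab. destruct (Hpt t Htab) as (Hv' & Efx' & Efy' & Ea' & Eb' & Ed').
    rewrite Efx', Efy', rho_eq, Ea' by auto.
    assert (0 < sin (v t)) by (apply sin_gt_0; lra).
    match goal with |- ?x = ?y => change (x = y :> R) end. field. lra.
  - rewrite Hrho2. nra. }
assert (DB : is_derive Tb s
   (st * (Tb s / Rr) + ct * (((Ta s / Rr) * ((fx s / Rr) ^2 + (fy s / Rr) ^2) - (fx s / Rr) * ((fx s / Rr) * (Ta s / Rr) + (fy s / Rr) * (Tb s / Rr))) / (sqrt ((fx s / Rr) ^2 + (fy s / Rr) ^2) * ((fx s / Rr) ^2 + (fy s / Rr) ^2))))).
{ eapply is_derive_ext_loc; [| apply (deriv_B _ _ s _ _ st ct IX IY)].
  - apply (filter_imp (fun t => a < t < b)); auto.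
    intros t Htab. destruct (Hpt t Htab) as (Hv' & Efx' & Efy' & Ea' & Eb' & Ed').
    rewrite Efx', Efy', rho_eq, Eb' by auto.
    assert (0 < sin (v t)) by (apply sin_gt_0; lra).
    match goal with |- ?x = ?y => change (x = y :> R) end. field. lra.
  - rewrite Hrho2. nra. }
assert (DD : is_derive Td s
   (st * (- ((fx s / Rr) * (Ta s / Rr) + (fy s / Rr) * (Tb s / Rr)) / sqrt (1 - ((fx s / Rr) ^2 + (fy s / Rr) ^2))))).
{ eapply is_derive_ext_loc; [| apply (deriv_D _ _ s _ _ st IX IY)].
  - apply (filter_imp (fun t => a < t < b)); auto.
    intros t Htab. destruct (Hpt t Htab) as (Hv' & Efx' & Efy' & Ea' & Eb' & Ed').
    rewrite Efx', Efy', rho1_eq, Ed' by auto.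
    match goal with |- ?x = ?y => change (x = y :> R) end. ring.
  - rewrite Hrho2. pose proof (s2c2 (v s)). nra. }
assert (EV : vderive (vderive alpha) s = mk3 (Derive Ta s) (Derive Tb s) (Derive Td s)) by reflexivity.
assert (EA : vderive alpha s = mk3 (Ta s) (Tb s) (Td s)) by reflexivity.
unfold geod_curv. rewrite EV, EA, normalN_eq by auto.
rewrite (is_derive_unique _ _ _ DA), (is_derive_unique _ _ _ DB), (is_derive_unique _ _ _ DD).
assert (Hsq : sqrt ((fx s / Rr) ^2 + (fy s / Rr) ^2) = sin (v s)) by (rewrite Efx, Efy; apply rho_eq; auto).
assert (Hsq1 : sqrt (1 - ((fx s / Rr) ^2 + (fy s / Rr) ^2)) = cos (v s)) by (rewrite Efx, Efy; apply rho1_eq; auto).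
rewrite Hsq, Hsq1, Ea, Eb, Ed.
apply final_alg with (X := fx s / Rr) (Y := fy s / Rr).
- pose proof (s2c2 (u s)); lra.
- apply s2c2.
- exact Ht.
- exact Hsv.
- exact Hcv.
- exact HR.
- rewrite Efx. field. lra.
- rewrite Efy. field. lra.
- reflexivity.
- reflexivity.
- reflexivity.
Qed.
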